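(* For every integer $n\ge 1$, the restriction to $\mathfrak{sp}(2n)$ of the functional $$F_n=\sum_{i=1}^{n}\sum_{j=1}^{n+1-i}e_{i,j}^*$$ is regular on $C_n=\mathfrak{sp}(2n)$, i.e. the kernel of its Kirillov form on $\mathfrak{sp}(2n)$ has dimension $n$.
   Context: Over $\mathbb{C}$. $e_{i,j}^*(X)=X_{i,j}$. For an $n\times n$ matrix $M$, let $M^{\hat t}$ denote its transpose across the antidiagonal, $(M^{\hat t})_{i,j}=M_{n+1-j,n+1-i}$. Here $\mathfrak{sp}(2n)$ denotes the Lie algebra of $2n\times 2n$ matrices of the block form $\begin{pmatrix}A&B\\ C&-A^{\hat t}\end{pmatrix}$ with $A,B,C$ arbitrary $n\times n$ matrices subject to $B^{\hat t}=B$, $C^{\hat t}=C$ (equivalently, spanned by $e_{i,j}-e_{2n+1-j,2n+1-i}$ for $1\le i,j\le n$, and $e_{i,j}+e_{2n+1-j,2n+1-i}$ for $i\le n<j$ or $j\le n<i$). For $f\in\mathfrak{g}^*$, $B_f(x,y)=f([x,y])$, $\ker(B_f)=\{x\in\mathfrak{g}: f([x,y])=0\ \forall y\in\mathfrak{g}\}$, and $f$ is regular if $\dim\ker(B_f)=\operatorname{ind}\mathfrak{g}:=\min_{g\in\mathfrak{g}^*}\dim\ker(B_g)$. It is known that $\operatorname{ind}\mathfrak{sp}(2n)=n$. *)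

(* Defs.v *)
From HB Require Import structures.
From mathcomp Require Import all_boot all_order all_algebra.
From mathcomp Require Import complex.
From mathcomp Require Import Rstruct.
From Stdlib Require Rdefinitions.
Set Implicit Arguments. Unset Strict Implicit. Unset Printing Implicit Defensive.
Import Order.TTheory GRing.Theory Num.Theory.
Local Open Scope ring_scope.

Notation CC := (complex Rdefinitions.R).

(* Transpose across the antidiagonal: (M^t^)_{i,j} = M_{n+1-j, n+1-i}. *)
Definition antitr (F : Type) (n : nat) (M : 'M[F]_n) : 'M[F]_n :=
  \matrix_(i < n, j < n) M (rev_ord j) (rev_ord i).

(* sp(2n): 2n x 2n matrices (indices 'I_(n+n)) of block form
   [[A, B], [C, -A^t^]] with B^t^ = B and C^t^ = C. *)
Definition is_sp (n : nat) (M : 'M[CC]_(n + n)) : Prop :=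
  drsubmx M = - antitr (ulsubmx M) /\
  antitr (ursubmx M) = ursubmx M /\
  antitr (dlsubmx M) = dlsubmx M.

Definition lie_br (m : nat) (X Y : 'M[CC]_m) : 'M[CC]_m := X *m Y - Y *m X.

(* F_n = sum_{i=1}^n sum_{j=1}^{n+1-i} e*_{i,j}; with 0-based indices this is
   the sum of X i j over i + j < n. *)
Definition Fn (n : nat) (X : 'M[CC]_(n + n)) : CC :=
  \sum_(i < n + n) \sum_(j < n + n | (nat_of_ord i + nat_of_ord j < n)%N) X i j.

Definition in_kirillov_kernel (n : nat) (f : 'M[CC]_(n + n) -> CC)
    (x : 'M[CC]_(n + n)) : Prop :=
  is_sp x /\ forall y, is_sp y -> f (lie_br x y) = 0.

(* Main.v *)
Require Import Defs.
From HB Require Import structures.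
From mathcomp Require Import all_boot all_order all_algebra.
From mathcomp Require Import complex Rstruct.
From mathcomp Require Import zify ring.
Set Implicit Arguments. Unset Strict Implicit. Unset Printing Implicit Defensive.
Import Order.TTheory GRing.Theory Num.Theory.
Local Open Scope ring_scope.

Section Ent.
Variable N : nat.
Implicit Types X Y : 'M[CC]_N.

Definition ent X (a b : nat) : CC :=
  if insub a is Some i then (if insub b is Some j then X i j else 0) else 0.

Lemma entE X (i j : 'I_N) : ent X i j = X i j.
Proof. by rewrite /ent !valK. Qed.

Lemma ent_outl X a b : (N <= a)%N -> ent X a b = 0.
Proof. by move=> h; rewrite /ent insubN // -leqNgt. Qed.

Lemma ent_outr X a b : (N <= b)%N -> ent X a b = 0.
Proof. by move=> h; rewrite /ent; case: insub => // i; rewrite insubN // -leqNgt. Qed.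

Lemma sum_pick (F : 'I_N -> CC) (c : nat) :
  \sum_(k < N) ((k : nat) == c)%:R * F k = if insub c is Some i then F i else 0.
Proof.
case: insubP => [i _ <-|hc].
  rewrite (bigD1 i) //= eqxx mul1r big1 ?addr0 // => k /negbTE.
  by rewrite -(inj_eq val_inj) => ->; rewrite mul0r.
rewrite big1 // => k _; case: eqP => [ek|]; last by rewrite mul0r.
by move: hc; rewrite -ek ltn_ord.
Qed.

Lemma sum_pick_col X (c : nat) (j : 'I_N) :
  \sum_(k < N) ((k : nat) == c)%:R * X k j = ent X c j.
Proof. by rewrite sum_pick /ent valK; case: insub. Qed.

Lemma sum_pick_row X (c : nat) (i : 'I_N) :
  \sum_(k < N) ((k : nat) == c)%:R * X i k = ent X i c.
Proof. by rewrite sum_pick /ent valK. Qed.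

Lemma ent_ext X Y : (forall a b, (a < N)%N -> (b < N)%N -> ent X a b = ent Y a b) -> X = Y.
Proof. by move=> h; apply/matrixP => i j; rewrite -!entE h. Qed.

End Ent.

Lemma eqn_shift (i k c : nat) : (i <= c)%N -> (i + k == c) = (k == c - i)%N.
Proof. by move=> h; apply/eqP/eqP; lia. Qed.
Lemma eqn_shiftr (i k c : nat) : (i <= c)%N -> (k + i == c) = (k == c - i)%N.
Proof. by move=> h; apply/eqP/eqP; lia. Qed.

Section Mats.
Variable N : nat.
Implicit Types X Y : 'M[CC]_N.

Definition Amx : 'M[CC]_N := \matrix_(i, j) ((i + j < N)%N)%:R.
Definition Mmx : 'M[CC]_N :=
  \matrix_(i, j) (((i + j == N.-1)%N)%:R - ((i + j == N)%N)%:R).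

Lemma MmulE Y a b : ent (Mmx *m Y) a b =
  if (a < N)%N then ent Y (N.-1 - a) b - ent Y (N - a) b else 0.
Proof.
case: (ltnP a N) => ha; last by rewrite !ent_outl ?subr0.
case: (ltnP b N) => hb; last by rewrite !ent_outr ?subr0.
rewrite -[a]/(val (Ordinal ha)) -[b]/(val (Ordinal hb)) entE mxE.
under eq_bigr do rewrite mxE mulrBl.
rewrite sumrB /=.
have e1 k : (a + k == N.-1)%N = (k == N.-1 - a)%N by apply: eqn_shift; lia.
have e2 k : (a + k == N)%N = (k == N - a)%N by apply: eqn_shift; lia.
under eq_bigr do rewrite e1.
under [X in _ - X]eq_bigr do rewrite e2.
by rewrite !sum_pick_col.
Qed.

Lemma mulME Y a b : ent (Y *m Mmx) a b =
  if (b < N)%N then ent Y a (N.-1 - b) - ent Y a (N - b) else 0.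
Proof.
case: (ltnP b N) => hb; last by rewrite !ent_outr ?subr0.
case: (ltnP a N) => ha; last by rewrite !ent_outl ?subr0.
rewrite -[a]/(val (Ordinal ha)) -[b]/(val (Ordinal hb)) entE mxE.
under eq_bigr do rewrite mxE mulrBr mulrC [_ * (_ == N)%:R]mulrC.
rewrite sumrB /=.
have e1 k : (k + b == N.-1)%N = (k == N.-1 - b)%N by apply: eqn_shiftr; lia.
have e2 k : (k + b == N)%N = (k == N - b)%N by apply: eqn_shiftr; lia.
under eq_bigr do rewrite e1.
under [X in _ - X]eq_bigr do rewrite e2.
by rewrite !sum_pick_row.
Qed.

Lemma AentE a b : ent Amx a b = if (a < N)%N && (b < N)%N then ((a + b < N)%N)%:R else 0.
Proof.
case: (ltnP a N) => ha; last by rewrite !ent_outl ?subr0.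
case: (ltnP b N) => hb; last by rewrite !ent_outr ?subr0.
by rewrite -[a]/(val (Ordinal ha)) -[b]/(val (Ordinal hb)) entE mxE.
Qed.

Lemma AM : Amx *m Mmx = 1%:M.
Proof.
apply: ent_ext => a b ha hb.
rewrite mulME hb !AentE ha.
rewrite -[a]/(val (Ordinal ha)) -[b]/(val (Ordinal hb)) entE mxE /=.
rewrite -(inj_eq val_inj) /=.
have -> : (N.-1 - b < N)%N by lia.
have -> : (a + (N.-1 - b) < N)%N = (a <= b)%N by apply/idP/idP; lia.
case: (ltnP (N - b) N) => h2 /=.
  have -> : (a + (N - b) < N)%N = (a < b)%N by apply/idP/idP; lia.
  by case: (ltngtP a b) => h; rewrite ?subrr ?subr0.
have -> : b = 0%N by lia.
by rewrite subr0 leqn0.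
Qed.

Lemma MA : Mmx *m Amx = 1%:M.
Proof. exact: mulmx1C AM. Qed.

End Mats.

Section T.
Variable N : nat.
Implicit Types X Y P Z : 'M[CC]_N.
Local Notation M := (@Mmx N).
Local Notation A := (@Amx N).

Ltac entcase a b ha hb :=
  case: (ltnP a N) => ha; [|by rewrite ?ent_outl ?addr0 ?mulr0];
  case: (ltnP b N) => hb; [|by rewrite ?ent_outr ?addr0 ?mulr0];
  rewrite -[a]/(val (Ordinal ha)) -[b]/(val (Ordinal hb)) ?entE ?mxE.

Lemma ent0 a b : ent (0 : 'M[CC]_N) a b = 0.
Proof. by entcase a b ha hb. Qed.
Lemma entD X Y a b : ent (X + Y) a b = ent X a b + ent Y a b.
Proof. by entcase a b ha hb. Qed.
Lemma entZ c X a b : ent (c *: X) a b = c * ent X a b.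
Proof. by entcase a b ha hb. Qed.
Lemma ent1 a b : ent (1%:M : 'M[CC]_N) a b =
   if (a < N)%N && (b < N)%N then ((a == b))%:R else 0.
Proof.
case: (ltnP a N) => ha; last by rewrite !ent_outl.
case: (ltnP b N) => hb; last by rewrite !ent_outr.
by rewrite -[a]/(val (Ordinal ha)) -[b]/(val (Ordinal hb)) entE mxE.
Qed.

Lemma MMXE X a b : (a < N)%N -> ent (M *m (M *m X)) a b =
  ent X a b - ent X a.+1 b - (if (0 < a)%N then ent X a.-1 b - ent X a b else 0).
Proof.
move=> ha; rewrite MmulE ha MmulE.
have -> : (N.-1 - a < N)%N by lia.
have -> : (N.-1 - (N.-1 - a) = a)%N by lia.
have -> : (N - (N.-1 - a) = a.+1)%N by lia.
rewrite MmulE.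
case: (posnP a) => a0.
  by rewrite a0 subn0 ltnn subr0.
have -> : (N - a < N)%N by lia.
have -> : (N.-1 - (N - a) = a.-1)%N by lia.
by have -> : (N - (N - a) = a)%N by lia.
Qed.

Lemma XMME X a b : (b < N)%N -> ent (X *m M *m M) a b =
  ent X a b - ent X a b.+1 - (if (0 < b)%N then ent X a b.-1 - ent X a b else 0).
Proof.
move=> hb; rewrite mulME hb mulME.
have -> : (N.-1 - b < N)%N by lia.
have -> : (N.-1 - (N.-1 - b) = b)%N by lia.
have -> : (N - (N.-1 - b) = b.+1)%N by lia.
rewrite mulME.
case: (posnP b) => b0.
  by rewrite b0 subn0 ltnn subr0.
have -> : (N - b < N)%N by lia.
have -> : (N.-1 - (N - b) = b.-1)%N by lia.
by have -> : (N - (N - b) = b)%N by lia.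
Qed.

Lemma Tinj X : M *m (M *m X) = X *m M *m M -> (forall b, ent X 0 b = 0) -> X = 0.
Proof.
move=> HT H0.
have step a : (forall b, ent X a b = 0) -> (forall b, ent X a.-1 b = 0) ->
    forall b, ent X a.+1 b = 0.
  move=> Ha Hb b.
  case: (ltnP a N) => ha; last by rewrite ent_outl //; lia.
  case: (ltnP b N) => hb; last by rewrite ent_outr.
  have := congr1 (fun Z => ent Z a b) HT => /=.
  rewrite MMXE // XMME // !Ha Hb.
  case: (0 < a)%N; case: (0 < b)%N; rewrite !subrr ?subr0 ?sub0r => /eqP;
    by rewrite ?oppr_eq0 => /eqP.
have all_rows a : (forall b, ent X a b = 0) /\ (forall b, ent X a.+1 b = 0).
  elim: a => [|a [IH1 IH2]]; first by split => //; apply: step.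
  by split => //; apply: step.
apply: ent_ext => a b _ _; rewrite ent0; exact: (all_rows a).1.
Qed.

Lemma comm_M P : A *m P = P *m A -> M *m P = P *m M.
Proof.
move=> H.
by rewrite -[LHS]mulmx1 -AM mulmxA -(mulmxA M P A) -H mulmxA MA mul1mx.
Qed.

Lemma comm_T P : A *m P = P *m A -> M *m (M *m P) = P *m M *m M.
Proof. by move=> /comm_M H; rewrite H mulmxA H. Qed.

Fixpoint Tp (k : nat) : 'M[CC]_N := if k is k'.+1 then Tp k' *m M *m M else 1%:M.

Lemma TpA k : A *m Tp k = Tp k *m A.
Proof.
elim: k => [|k IH] /=; first by rewrite mulmx1 mul1mx.
rewrite !mulmxA IH -!mulmxA; congr (_ *m _).
by rewrite mulmxA AM mul1mx MA mulmx1.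
Qed.

Lemma Tp_row0 k : (forall j, (k < j)%N -> ent (Tp k) 0 j = 0) /\
                  ((k < N)%N -> ent (Tp k) 0 k = (-1) ^+ k).
Proof.
elim: k => [|k [IH1 IH2]] /=.
  split; first by move=> j j0; rewrite ent1; case: ifP => //; case: j j0.
  by move=> h; rewrite ent1 h.
split.
  move=> j hj; case: (ltnP j N) => hjN; last by rewrite ent_outr.
  rewrite XMME // !IH1 //; try lia.
  by case: ifP => _; rewrite ?subrr ?IH1 ?subr0 //; lia.
move=> hk; rewrite XMME // IH1 // IH1 // IH2; last by lia.
by rewrite ltn0Sn !subr0 sub0r exprS mulN1r.
Qed.

Lemma exists_comm (f : nat -> CC) :
  exists P, A *m P = P *m A /\ forall j, (j < N)%N -> ent P 0 j = f j.
Proof.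
suff H k : (k <= N)%N -> forall g : nat -> CC, (forall j, (k <= j)%N -> g j = 0) ->
    exists P, A *m P = P *m A /\ forall j, (j < N)%N -> ent P 0 j = g j.
  have [|P [h1 h2]] := H N (leqnn N) (fun j => if (j < N)%N then f j else 0).
    by move=> j hj; rewrite ltnNge hj.
  by exists P; split => // j hj; rewrite h2 hj.
elim: k => [|k IH] hk g hg.
  by exists 0; split; [rewrite mulmx0 mul0mx | move=> j _; rewrite ent0 hg].
pose c := g k * (-1) ^+ k.
have [|P [h1 h2]] := IH (ltnW hk) (fun j => g j - c * ent (Tp k) 0 j).
  move=> j hj; case: (ltngtP k j) => hkj.
  - by rewrite hg // (Tp_row0 k).1 // mulr0 subr0.
  - lia.
  - rewrite -hkj (Tp_row0 k).2 // /c -mulrA -exprMn mulrNN mulr1 expr1n mulr1 subrr //.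
exists (P + c *: Tp k); split.
  by rewrite mulmxDr mulmxDl h1 -scalemxAl -scalemxAr TpA.
by move=> j hj; rewrite entD entZ h2 // subrK.
Qed.

Lemma anticomm_0 Z : A *m Z + Z *m A = 0 -> Z = 0.
Proof.
move=> H.
have HA : A *m Z = - (Z *m A) by apply/eqP; rewrite -subr_eq0 opprK H.
have MZ : Z *m M = - (M *m Z).
  have <- : M *m (A *m Z) *m M = Z *m M by rewrite mulmxA MA mul1mx.
  by rewrite HA mulmxN mulNmx -mulmxA -mulmxA AM mulmx1.
have TZ : M *m (M *m Z) = Z *m M *m M.
  by rewrite MZ mulNmx -mulmxA MZ mulmxN opprK.
have [P [hP1 hP2]] := exists_comm (fun j => ent Z 0 j).
have ZP : Z = P.
  apply/eqP; rewrite -subr_eq0; apply/eqP; apply: Tinj.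
    by rewrite !mulmxBr !mulmxBl TZ comm_T.
  move=> b; rewrite entD; case: (ltnP b N) => hb; last by rewrite !ent_outr // addr0.
  by rewrite -scaleN1r entZ hP2 // mulN1r subrr.
have MZ2 : M *m Z = 0.
  move: MZ; rewrite {1}ZP -comm_M // -ZP => /eqP; rewrite -subr_eq0 opprK => /eqP.
  rewrite -mulr2n => /eqP; rewrite -scaler_nat scaler_eq0 pnatr_eq0 /= => /eqP //.
by rewrite -[Z]mul1mx -AM -mulmxA MZ2 mulmx0.
Qed.

End T.

Section AT.
Variable N : nat.
Implicit Types X Y W V : 'M[CC]_N.

Lemma antitrK X : antitr (antitr X) = X.
Proof. by apply/matrixP => i j; rewrite !mxE !rev_ordK. Qed.
Lemma antitrD X Y : antitr (X + Y) = antitr X + antitr Y.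
Proof. by apply/matrixP => i j; rewrite !mxE. Qed.
Lemma antitrN X : antitr (- X) = - antitr X.
Proof. by apply/matrixP => i j; rewrite !mxE. Qed.
Lemma antitr0 : antitr (0 : 'M[CC]_N) = 0.
Proof. by apply/matrixP => i j; rewrite !mxE. Qed.
Lemma antitr_mul X Y : antitr (X *m Y) = antitr Y *m antitr X.
Proof.
apply/matrixP => i j; rewrite !mxE (reindex_inj rev_ord_inj) /=.
by apply: eq_bigr => k _; rewrite !mxE ?rev_ordK mulrC.
Qed.
Lemma mxtrace_antitr X : \tr (antitr X) = \tr X.
Proof.
rewrite /mxtrace (reindex_inj rev_ord_inj) /=.
by apply: eq_bigr => k _; rewrite !mxE ?rev_ordK.
Qed.
Lemma tr_antitr_mul W V : \tr (W *m antitr V) = \tr (antitr W *m V).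
Proof. by rewrite -[LHS]mxtrace_antitr antitr_mul antitrK mxtrace_mulC. Qed.

Lemma tr_delta W (i j : 'I_N) : \tr (W *m delta_mx j i) = W i j.
Proof.
rewrite /mxtrace (bigD1 i) //= big1 ?addr0.
  rewrite mxE (bigD1 j) //= big1 ?addr0; first by rewrite mxE !eqxx mulr1.
  by move=> k /negbTE kj; rewrite mxE kj mulr0.
by move=> k /negbTE ki; rewrite mxE big1 // => l _; rewrite mxE ki andbF mulr0.
Qed.

Lemma tr_zero W : (forall a, \tr (W *m a) = 0) -> W = 0.
Proof. by move=> h; apply/matrixP => i j; rewrite -tr_delta h mxE. Qed.

Lemma tr_sym_zero W : (forall c, antitr c = c -> \tr (W *m c) = 0) -> W + antitr W = 0.
Proof.
move=> h; apply/matrixP => i j.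
have := h (delta_mx j i + antitr (delta_mx j i)).
rewrite antitrD antitrK addrC => /(_ erefl).
rewrite mulmxDr mxtraceD tr_antitr_mul !tr_delta.
by rewrite !mxE.
Qed.

Definition Jmx : 'M[CC]_N := \matrix_(i, j) ((i + j == N.-1)%N)%:R.

Lemma JmulE X i j : (Jmx *m X) i j = X (rev_ord i) j.
Proof.
rewrite mxE.
have e k : (i + k == N.-1)%N = (k == N.-1 - i)%N by apply: eqn_shift; have := ltn_ord i; lia.
under eq_bigr do rewrite mxE e.
rewrite sum_pick_col.
have -> : (N.-1 - i = N - i.+1)%N by lia.
exact: (entE X (rev_ord i) j).
Qed.

Lemma mulJE X i j : (X *m Jmx) i j = X i (rev_ord j).
Proof.
rewrite mxE.
have e k : (k + j == N.-1)%N = (k == N.-1 - j)%N by apply: eqn_shiftr; have := ltn_ord j; lia.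
under eq_bigr do rewrite mxE e mulrC.
rewrite sum_pick_row.
have -> : (N.-1 - j = N - j.+1)%N by lia.
exact: (entE X i (rev_ord j)).
Qed.

Lemma JJ : Jmx *m Jmx = 1%:M.
Proof.
apply/matrixP => i j; rewrite JmulE !mxE /=.
congr (_%:R); rewrite -(inj_eq val_inj) /=.
by apply/eqP/eqP; have := ltn_ord i; have := ltn_ord j; lia.
Qed.

Lemma JB : Jmx *m antitr (@Amx N) = @Amx N *m Jmx.
Proof. by apply/matrixP => i j; rewrite JmulE mulJE !mxE rev_ordK addnC. Qed.

Lemma BJ : antitr (@Amx N) *m Jmx = Jmx *m @Amx N.
Proof. by apply/matrixP => i j; rewrite JmulE mulJE !mxE rev_ordK addnC. Qed.

End AT.

Section Fn.
Variable N : nat.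
Local Notation A := (@Amx N).

Lemma FnE (Z : 'M[CC]_(N + N)) : Fn Z = \tr (A *m ulsubmx Z).
Proof.
rewrite /Fn /mxtrace.
under eq_bigr do rewrite big_mkcond /=.
rewrite big_split_ord /= [X in _ + X]big1 ?addr0; last first.
  move=> i _; rewrite big1 // => j _.
  by rewrite ifF //=; apply/negbTE; rewrite -leqNgt; lia.
transitivity (\sum_(i < N) \sum_(j < N)
   (if (i + j < N)%N then Z (lshift N i) (lshift N j) else 0)).
  apply: eq_bigr => i _; rewrite big_split_ord /= [X in _ + X]big1 ?addr0 //.
  by move=> j _; rewrite ifF //=; apply/negbTE; rewrite -leqNgt; lia.
rewrite exchange_big; apply: eq_bigr => i _; rewrite mxE; apply: eq_bigr => j _.
rewrite !mxE /= addnC.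
by case: ifP; rewrite ?mul1r ?mul0r.
Qed.

End Fn.

Section Br.
Variable N : nat.
Local Notation A := (@Amx N).

Lemma Fn_br_blk (P Q R S a b c d : 'M[CC]_N) :
  Fn (lie_br (block_mx P Q R S) (block_mx a b c d)) =
  \tr ((A *m P - P *m A) *m a) + \tr (A *m Q *m c) - \tr (R *m A *m b).
Proof.
rewrite FnE /lie_br !mulmx_block opp_block_mx add_block_mx block_mxKul.
have trB (U V : 'M[CC]_N) : \tr (U - V) = \tr U - \tr V by exact: raddfB.
rewrite !mulmxDr mulmxN !mulmxDr trB !mxtraceD mulmxBl trB.
have e1 : \tr (A *m (a *m P)) = \tr (P *m A *m a) by rewrite mulmxA mxtrace_mulC mulmxA.
have e2 : \tr (A *m (b *m R)) = \tr (R *m A *m b) by rewrite mulmxA mxtrace_mulC mulmxA.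
rewrite e1 e2 !mulmxA.
ring.
Qed.

End Br.

Section Kir.
Variable N : nat.
Local Notation A := (@Amx N).
Local Notation J := (@Jmx N).

Lemma kir_iff (x : 'M[CC]_(N + N)) : in_kirillov_kernel (@Fn N) x <->
  [/\ drsubmx x = - antitr (ulsubmx x), ursubmx x = 0, dlsubmx x = 0 &
      A *m ulsubmx x = ulsubmx x *m A].
Proof.
split.
  case=> [[hS [hQ hR]] H].
  have hF (a b c : 'M[CC]_N) : antitr b = b -> antitr c = c ->
      \tr ((A *m ulsubmx x - ulsubmx x *m A) *m a) + \tr (A *m ursubmx x *m c)
        - \tr (dlsubmx x *m A *m b) = 0.
    move=> hb hc; have := H (block_mx a b c (- antitr a)).
    rewrite -{1}(submxK x) Fn_br_blk; apply.
    by rewrite /is_sp block_mxKdr block_mxKul block_mxKur block_mxKdl.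
  have W1 : A *m ulsubmx x - ulsubmx x *m A = 0.
    apply: tr_zero => a; have := hF a 0 0 (antitr0 _) (antitr0 _).
    by rewrite !mulmx0 mxtrace0 subr0 addr0.
  have W2 : A *m ursubmx x + antitr (A *m ursubmx x) = 0.
    apply: tr_sym_zero => c hc; have := hF 0 0 c (antitr0 _) hc.
    by rewrite !mulmx0 mxtrace0 add0r subr0.
  have W3 : dlsubmx x *m A + antitr (dlsubmx x *m A) = 0.
    apply: tr_sym_zero => b hb; have := hF 0 b 0 hb (antitr0 _).
    rewrite !mulmx0 mxtrace0 add0r sub0r => /eqP; rewrite oppr_eq0 => /eqP //.
  split => //.
  - rewrite antitr_mul hQ in W2.
    have HZ : ursubmx x *m J = 0.
      apply: anticomm_0.
      rewrite mulmxA -(mulmxA (ursubmx x) J A) -BJ mulmxA -mulmxDl W2 mul0mx //.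
    by rewrite -[ursubmx x]mulmx1 -(JJ N) mulmxA HZ mul0mx.
  - rewrite antitr_mul hR in W3.
    have HZ : J *m dlsubmx x = 0.
      apply: anticomm_0.
      rewrite mulmxA -JB -!mulmxA -mulmxDr addrC W3 mulmx0 //.
    by rewrite -[dlsubmx x]mul1mx -(JJ N) -mulmxA HZ mulmx0.
  - by apply/eqP; rewrite -subr_eq0 W1.
case=> hS hQ hR hA; split.
  by rewrite /is_sp hS hQ hR antitr0.
move=> y _; rewrite -{1}(submxK x) -(submxK y) Fn_br_blk hQ hR hA subrr.
by rewrite !(mul0mx, mulmx0, mxtrace0) subr0 addr0.
Qed.

End Kir.

Definition hmap N (x : 'M[CC]_(N + N)) : 'M[CC]_(N + N) :=
  block_mx (Amx N *m ulsubmx x - ulsubmx x *m Amx N) (ursubmx x) (dlsubmx x)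
           (drsubmx x + antitr (ulsubmx x)).

Section Lin.
Variable N : nat.
Implicit Types u v : 'M[CC]_(N + N).
Lemma ulsubmxL c u v : ulsubmx (c *: u + v) = c *: ulsubmx u + ulsubmx v.
Proof. by apply/matrixP => i j; rewrite !mxE. Qed.
Lemma ursubmxL c u v : ursubmx (c *: u + v) = c *: ursubmx u + ursubmx v.
Proof. by apply/matrixP => i j; rewrite !mxE. Qed.
Lemma dlsubmxL c u v : dlsubmx (c *: u + v) = c *: dlsubmx u + dlsubmx v.
Proof. by apply/matrixP => i j; rewrite !mxE. Qed.
Lemma drsubmxL c u v : drsubmx (c *: u + v) = c *: drsubmx u + drsubmx v.
Proof. by apply/matrixP => i j; rewrite !mxE. Qed.
Lemma antitrZ c (X : 'M[CC]_N) : antitr (c *: X) = c *: antitr X.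
Proof. by apply/matrixP => i j; rewrite !mxE. Qed.
End Lin.

Fact hmap_lin N : linear (@hmap N).
Proof.
move=> c u v; rewrite /hmap ulsubmxL ursubmxL dlsubmxL drsubmxL.
rewrite scale_block_mx add_block_mx; congr block_mx.
- by rewrite mulmxDr mulmxDl -scalemxAr -scalemxAl scalerBr opprD addrACA.
- by rewrite antitrD antitrZ scalerDr addrACA.
Qed.

HB.instance Definition _ N := GRing.isLinear.Build CC 'M[CC]_(N + N) 'M[CC]_(N + N) _
  (@hmap N) (@hmap_lin N).

Definition phim N (i0 : 'I_N) (x : 'M[CC]_(N + N)) : 'rV[CC]_N := row i0 (ulsubmx x).

Fact phim_lin N i0 : linear (@phim N i0).
Proof. by move=> c u v; apply/matrixP => i j; rewrite !mxE. Qed.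

HB.instance Definition _ N i0 := GRing.isLinear.Build CC 'M[CC]_(N + N) 'rV[CC]_N _
  (@phim N i0) (@phim_lin N i0).

Lemma hmap0 N (x : 'M[CC]_(N + N)) : hmap x = 0 <->
  [/\ drsubmx x = - antitr (ulsubmx x), ursubmx x = 0, dlsubmx x = 0 &
      Amx N *m ulsubmx x = ulsubmx x *m Amx N].
Proof.
split.
  move/eqP; rewrite /hmap block_mx_eq0 => /and4P [/eqP h1 /eqP h2 /eqP h3 /eqP h4].
  split => //; first by apply/eqP; rewrite -addr_eq0 h4.
  by apply/eqP; rewrite -subr_eq0 h1.
case=> h1 h2 h3 h4; apply/eqP; rewrite /hmap block_mx_eq0 h1 h2 h3 h4 subrr addNr.
by rewrite !eqxx.
Qed.

Theorem main (n : nat) : (1 <= n)%N ->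
  exists K : {vspace 'M[CC]_(n + n)},
    (forall x : 'M[CC]_(n + n), x \in K <-> in_kirillov_kernel (@Fn n) x) /\
    \dim K = n.
Proof.
move=> hn.
exists (lker (linfun (@hmap n))); split.
  by move=> x; rewrite memv_ker lfunE /= kir_iff -hmap0; split => /eqP.
pose i0 : 'I_n := Ordinal hn.
pose phi := linfun (@phim n i0).
have cap0 : (lker (linfun (@hmap n)) :&: lker phi = 0)%VS.
  apply/eqP; rewrite -subv0; apply/subvP => x; rewrite memv_cap !memv_ker !lfunE /=.
  case/andP => /eqP /hmap0 [hS hQ hR hA] /eqP hp; rewrite memv0.
  have hP : ulsubmx x = 0.
    apply: Tinj; first exact: comm_T.
    move=> b; case: (ltnP b n) => hb; last by rewrite ent_outr.
    rewrite (entE (ulsubmx x) i0 (Ordinal hb)).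
    by move: hp; rewrite /phim => /matrixP /(_ 0 (Ordinal hb)); rewrite !mxE.
  by apply/eqP; rewrite -(submxK x) hS hQ hR hP antitr0 oppr0 block_mx0.
rewrite -(limg_dim_eq cap0).
have -> : (phi @: lker (linfun (@hmap n)))%VS = fullv.
  apply/eqP; rewrite eqEsubv subvf /=; apply/subvP => v _.
  have [P [hP1 hP2]] := exists_comm n
    (fun j => if (insub j : option 'I_n) is Some jj then (v : 'rV[CC]_n) ord0 jj else 0).
  apply/memv_imgP; exists (block_mx P 0 0 (- antitr P)).
    rewrite memv_ker lfunE /=; apply/eqP/hmap0.
    by rewrite block_mxKul block_mxKur block_mxKdl block_mxKdr.
  rewrite lfunE /= /phim block_mxKul; apply/matrixP => i j; rewrite (ord1 i) !mxE.
  have := hP2 j (ltn_ord j); rewrite (entE P i0 j) valK => ->.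
  by [].
by rewrite dimvf /dim /= mul1n.
Qed.

Unset Implicit Arguments.

Theorem theorem4p9 (n : nat) : (1 <= n)%N ->
  exists K : {vspace 'M[CC]_(n + n)},
    (forall x : 'M[CC]_(n + n), x \in K <-> in_kirillov_kernel (@Fn n) x) /\
    \dim K = n.
Proof. exact: main. Qed.
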